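(* Let $\mathcal{S}$ and $\mathcal{A}$ be finite state and action spaces, $\gamma\in[0,1)$, $\mu$ a start-state distribution on $\mathcal{S}$, $P(s'|s,a)$ and $P_m(s'|s,a)$ two state transition probabilities, and $\pi(a|s)$, $\pi'(a|s)$ arbitrary policies. Then $$\big\|\mathbf{d}^{\pi'}-\mathbf{d}^{\pi}_m\big\|_1 \le \frac{2\gamma}{1-\gamma}\Big(\mathbb{E}_{s\sim d^\pi_m}\big[D_{TV}(\pi'(\cdot|s)\|\pi(\cdot|s))\big] + \mathbb{E}_{s\sim d^\pi_m,\,a\sim\pi}\big[D_{TV}(P(\cdot|s,a)\|P_m(\cdot|s,a))\big]\Big).$$
   Context: $d^{\pi'}(s)=(1-\gamma)\sum_{t\ge0}\gamma^t\Pr(S_t=s\mid\pi',P)$ is the discounted stationary state distribution under policy $\pi'$ and dynamics $P$ with $S_0\sim\mu$, and $d^\pi_m(s)=(1-\gamma)\sum_{t\ge0}\gamma^t\Pr(S_t=s\mid\pi,P_m)$ the corresponding distribution under policy $\pi$ and dynamics $P_m$ with the same start distribution $\mu$; $\mathbf{d}^{\pi'},\mathbf{d}^\pi_m\in\mathbb{R}^{|\mathcal{S}|}$ are their vector forms. $D_{TV}(p\|q)=\frac12\sum_x|p(x)-q(x)|$ is the total variation distance. *)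

(* Defs.v *)
From HB Require Import structures.
From mathcomp Require Import all_boot all_order all_algebra.
From mathcomp Require Import all_classical all_reals all_analysis.
Set Implicit Arguments. Unset Strict Implicit. Unset Printing Implicit Defensive.
Import Order.TTheory GRing.Theory Num.Theory.
Local Open Scope ring_scope.

Section MDP.
Variables (R : realType) (S A : finType).

Definition is_distr (T : finType) (p : T -> R) : Prop :=
  (forall x, 0 <= p x) /\ \sum_(x : T) p x = 1.

(* transition kernel P(s'|s,a) written P s a s' ; policy pi(a|s) written pi s a *)
Definition is_kernel (P : S -> A -> S -> R) : Prop :=
  forall s a, is_distr (P s a).
Definition is_policy (pi : S -> A -> R) : Prop :=
  forall s, is_distr (pi s).

Fixpoint state_prob (mu : S -> R) (P : S -> A -> S -> R) (pi : S -> A -> R)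
  (t : nat) (s' : S) : R :=
  match t with
  | O => mu s'
  | t.+1 => \sum_(s : S) state_prob mu P pi t s * \sum_(a : A) pi s a * P s a s'
  end.

(* discounted stationary state distribution
   d(s) = (1-gamma) sum_{t>=0} gamma^t Pr(S_t = s), the series taken as the
   limit of its partial sums (it converges since 0 <= gamma < 1) *)
Definition disc_state_distr (gamma : R) (mu : S -> R) (P : S -> A -> S -> R)
  (pi : S -> A -> R) (s : S) : R :=
  (1 - gamma) * limn (fun n => \sum_(0 <= t < n) gamma ^+ t * state_prob mu P pi t s).

End MDP.

Definition D_TV (R : realType) (T : finType) (p q : T -> R) : R :=
  2^-1 * \sum_(x : T) `|p x - q x|.

(* Main.v *)
Require Import Defs.
From HB Require Import structures.
From mathcomp Require Import all_boot all_order all_algebra.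
From mathcomp Require Import all_classical all_reals all_analysis.
From mathcomp Require Import ring lra.
Import Order.TTheory GRing.Theory Num.Theory.
Import numFieldNormedType.Exports.
Set Implicit Arguments. Unset Strict Implicit. Unset Printing Implicit Defensive.
Local Open Scope classical_set_scope.
Local Open Scope ring_scope.


Section Aux.
Variables (R : realType) (S A : finType).

Definition Tm (P : S -> A -> S -> R) (pi : S -> A -> R) s s' :=
  \sum_(a : A) pi s a * P s a s'.

Lemma Tm_ge0 (P : S -> A -> S -> R) (pi : S -> A -> R) s s' : is_kernel P -> is_policy pi -> 0 <= Tm P pi s s'.
Proof.
move=> hP hpi; apply: sumr_ge0 => a _; apply: mulr_ge0.
  exact: (hpi s).1.
exact: (hP s a).1.
Qed.

Lemma Tm_sum1 (P : S -> A -> S -> R) (pi : S -> A -> R) s : is_kernel P -> is_policy pi -> \sum_s' Tm P pi s s' = 1.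
Proof.
move=> hP hpi; rewrite /Tm exchange_big /=.
rewrite -(hpi s).2; apply: eq_bigr => a _.
by rewrite -mulr_sumr (hP s a).2 mulr1.
Qed.

Lemma sp_ge0 (mu : S -> R) (P : S -> A -> S -> R) (pi : S -> A -> R) t s : is_distr mu -> is_kernel P -> is_policy pi ->
  0 <= state_prob mu P pi t s.
Proof.
move=> hmu hP hpi; elim: t s => [|t IH] s /=; first exact: hmu.1.
apply: sumr_ge0 => s0 _; apply: mulr_ge0 => //.
exact: Tm_ge0.
Qed.

Lemma sp_sum1 (mu : S -> R) (P : S -> A -> S -> R) (pi : S -> A -> R) t : is_distr mu -> is_kernel P -> is_policy pi ->
  \sum_s state_prob mu P pi t s = 1.
Proof.
move=> hmu hP hpi; elim: t => [|t IH] /=; first exact: hmu.2.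
rewrite exchange_big /= -IH; apply: eq_bigr => s _.
by rewrite -mulr_sumr (Tm_sum1 s hP hpi) mulr1.
Qed.
Lemma sp_le1 (mu : S -> R) (P : S -> A -> S -> R) (pi : S -> A -> R) t s : is_distr mu -> is_kernel P -> is_policy pi ->
  state_prob mu P pi t s <= 1.
Proof.
move=> hmu hP hpi; rewrite -(sp_sum1 t hmu hP hpi).
rewrite (bigD1 s) //= lerDl; apply: sumr_ge0 => *; exact: sp_ge0.
Qed.

Lemma geom_sum (g : R) n : (1 - g) * \sum_(0 <= t < n) g ^+ t = 1 - g ^+ n.
Proof.
elim: n => [|n IH]; first by rewrite big_geq // mulr0 expr0 subrr.
rewrite big_nat_recr //= mulrDr IH exprS; ring.
Qed.

End Aux.


Section Inv.
Variable R : realType.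
Lemma inv_geom (g : R) (a c : nat -> R) : 0 <= g -> a 0%N = 0 ->
  (forall t, a t.+1 <= a t + c t) ->
  forall n, (1 - g) * \sum_(0 <= t < n) g ^+ t * a t + g ^+ n * a n
            <= g * \sum_(0 <= t < n) g ^+ t * c t.
Proof.
move=> g0 a0 ac; elim=> [|n IH].
  by rewrite !big_geq // a0 !mulr0 addr0.
rewrite !big_nat_recr //=.
have h : g ^+ n.+1 * a n.+1 <= g ^+ n.+1 * (a n + c n).
  by apply: ler_wpM2l; [exact: exprn_ge0|exact: ac].
move: IH h; rewrite exprS.
set G := g ^+ n; set S1 := \sum_(0 <= t < n) _; set S2 := \sum_(0 <= t < n) _.
move=> IH h; nra.
Qed.
End Inv.


Lemma cvg_sumS (R : realType) (I : finType) (f : I -> nat -> R) (l : I -> R) :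
  (forall i, f i @ \oo --> l i) -> (fun n => \sum_i f i n) @ \oo --> \sum_i l i.
Proof.
move=> H.
have hc : continuous (fun x : R * R => x.1 + x.2) by exact: add_continuous.
apply: (cvg_big hc) => // i _; exact: H.
Qed.

Section Main.
Variables (R : realType) (S A : finType) (gamma : R)
  (mu : S -> R) (P Pm : S -> A -> S -> R) (pi pi' : S -> A -> R).
Hypotheses (g0 : 0 <= gamma) (g1 : gamma < 1) (hmu : is_distr mu)
  (hP : is_kernel P) (hPm : is_kernel Pm) (hpi : is_policy pi) (hpi' : is_policy pi').

Let x t s := state_prob mu P pi' t s.
Let y t s := state_prob mu Pm pi t s.
Let T1 := Tm P pi'.
Let T2 := Tm Pm pi.
Let del s := \sum_s' `|T1 s s' - T2 s s'|.
Let a t := \sum_s `|x t s - y t s|.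
Let c t := \sum_s y t s * del s.

Lemma a_step t : a t.+1 <= a t + c t.
Proof.
have E : forall s', x t.+1 s' - y t.+1 s' =
   \sum_s ((x t s - y t s) * T1 s s' + y t s * (T1 s s' - T2 s s')).
  move=> s'; rewrite /x /y /= -sumrB; apply: eq_bigr => s _.
  rewrite /T1 /T2 /Tm; ring.
rewrite /a (eq_bigr _ (fun s' _ => congr1 Num.norm (E s'))).
apply: (le_trans (ler_sum _ (fun s' _ => ler_norm_sum _ _ _))) => /=.
apply: (@le_trans _ _ (\sum_s' \sum_s (`|x t s - y t s| * T1 s s' + y t s * `|T1 s s' - T2 s s'|))).
  apply: ler_sum => s' _; apply: ler_sum => s _.
  apply: (le_trans (ler_normD _ _)); rewrite !normrM.
  rewrite (ger0_norm (Tm_ge0 _ _ hP hpi')) (ger0_norm (sp_ge0 _ _ hmu hPm hpi)) //.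
rewrite exchange_big /= -big_split /=; apply: ler_sum => s _.
rewrite big_split /= -mulr_sumr -mulr_sumr.
by rewrite (Tm_sum1 s hP hpi') mulr1.
Qed.

Definition Dp (f : nat -> S -> R) n s := \sum_(0 <= t < n) gamma ^+ t * f t s.

Lemma step1 n : \sum_s `|Dp x n s - Dp y n s| <= \sum_(0 <= t < n) gamma ^+ t * a t.
Proof.
rewrite /Dp /a.
apply: (@le_trans _ _ (\sum_s \sum_(0 <= t < n) gamma ^+ t * `|x t s - y t s|)).
  apply: ler_sum => s _; rewrite -sumrB.
  apply: (le_trans (ler_norm_sum _ _ _)); apply: ler_sum => t _.
  by rewrite -mulrBr normrM ger0_norm // exprn_ge0.
by rewrite exchange_big /=; apply: ler_sum => t _; rewrite mulr_sumr.
Qed.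

Lemma step4 n : \sum_(0 <= t < n) gamma ^+ t * c t = \sum_s del s * Dp y n s.
Proof.
rewrite /c /Dp; under eq_bigr do rewrite mulr_sumr.
rewrite exchange_big /=; apply: eq_bigr => s _; rewrite mulr_sumr.
by apply: eq_bigr => t _; ring.
Qed.

Lemma fin_ineq n : (1 - gamma) * \sum_s `|Dp x n s - Dp y n s|
   <= gamma * \sum_s del s * Dp y n s.
Proof.
rewrite -step4.
have := inv_geom g0 (a := a) (c := c) _ a_step n.
have a0 : a 0%N = 0 by rewrite /a big1 // => s _; rewrite /x /y /= subrr normr0.
move=> /(_ a0) H.
have an : 0 <= gamma ^+ n * a n.
  by apply: mulr_ge0; [exact: exprn_ge0| apply: sumr_ge0 => *].
have s1 := step1 n.
have g1' : 0 <= 1 - gamma by rewrite subr_ge0 ltW.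
apply: (le_trans (ler_wpM2l g1' s1)); apply: le_trans H.
by rewrite lerDl.
Qed.


Lemma Dp_nd (f : nat -> S -> R) : (forall t s, 0 <= f t s) ->
  forall s, nondecreasing_seq (fun n => Dp f n s).
Proof.
move=> hf s; apply/nondecreasing_seqP => n.
rewrite /Dp big_nat_recr //= lerDl; apply: mulr_ge0 => //; exact: exprn_ge0.
Qed.

Lemma Dp_cvg (f : nat -> S -> R) : (forall t s, 0 <= f t s) ->
  (forall t s, f t s <= 1) ->
  forall s, (fun n => Dp f n s) @ \oo --> limn (fun n => Dp f n s).
Proof.
move=> hf0 hf1 s.
have : cvgn (fun n => Dp f n s).
  apply: nondecreasing_is_cvgn; first exact: Dp_nd.
  exists (1 - gamma)^-1 => _ [n _ <-].
  have gp : 0 < 1 - gamma by rewrite subr_gt0.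
  apply: (@le_trans _ _ (\sum_(0 <= t < n) gamma ^+ t)).
    apply: ler_sum => t _; rewrite ler_piMr //; exact: exprn_ge0.
  rewrite -[X in X <= _](mulKf (lt0r_neq0 gp)) geom_sum.
  rewrite -[X in _ <= X]mulr1; apply: ler_wpM2l; first by rewrite invr_ge0 ltW.
  by rewrite gerDl oppr_le0 exprn_ge0.
by [].
Qed.


Lemma two_TV (T : finType) (p q : T -> R) : 2 * D_TV p q = \sum_x `|p x - q x|.
Proof. by rewrite /D_TV mulrA mulfV ?mul1r // pnatr_eq0. Qed.

Lemma del_le s : del s <= 2 * D_TV (pi' s) (pi s)
   + \sum_a pi s a * (2 * D_TV (P s a) (Pm s a)).
Proof.
under [X in _ <= _ + X]eq_bigr do rewrite two_TV.
rewrite two_TV /del.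
apply: (@le_trans _ _ (\sum_s' \sum_a (`|pi' s a - pi s a| * P s a s' + pi s a * `|P s a s' - Pm s a s'|))).
  apply: ler_sum => s' _; rewrite /T1 /T2 /Tm -sumrB.
  apply: (le_trans (ler_norm_sum _ _ _)); apply: ler_sum => b _.
  have -> : pi' s b * P s b s' - pi s b * Pm s b s' =
     (pi' s b - pi s b) * P s b s' + pi s b * (P s b s' - Pm s b s') by ring.
  apply: (le_trans (ler_normD _ _)); rewrite !normrM.
  by rewrite (ger0_norm ((hP s b).1 s')) (ger0_norm ((hpi s).1 b)).
rewrite exchange_big /=; under eq_bigr do rewrite big_split /=.
rewrite big_split /= lerD //.
  by apply: ler_sum => b _; rewrite -mulr_sumr (hP s b).2 mulr1.
by apply: ler_sum => b _; rewrite -mulr_sumr.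
Qed.

Lemma main_ineq :
  let d' := disc_state_distr gamma mu P pi' in
  let dm := disc_state_distr gamma mu Pm pi in
  \sum_(s : S) `|d' s - dm s|
    <= (2 * gamma) / (1 - gamma) *
       (\sum_(s : S) dm s * D_TV (pi' s) (pi s)
        + \sum_(s : S) dm s * \sum_(a : A) pi s a * D_TV (P s a) (Pm s a)).
Proof.
cbv zeta; set d' := disc_state_distr gamma mu P pi'; set dm := disc_state_distr gamma mu Pm pi.
have cx := Dp_cvg (f := x) (fun t s => sp_ge0 t s hmu hP hpi') (fun t s => sp_le1 t s hmu hP hpi').
have cy := Dp_cvg (f := y) (fun t s => sp_ge0 t s hmu hPm hpi) (fun t s => sp_le1 t s hmu hPm hpi).
set Lx := fun s => limn (fun n => Dp x n s).
set Ly := fun s => limn (fun n => Dp y n s).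
have key : (1 - gamma) * \sum_s `|Lx s - Ly s| <= gamma * \sum_s del s * Ly s.
  have c1 : (fun n => (1 - gamma) * \sum_s `|Dp x n s - Dp y n s|) @ \oo -->
            (1 - gamma) * \sum_s `|Lx s - Ly s|.
    apply: cvgMl_tmp; apply: cvg_sumS => s.
    by apply: cvg_norm; apply: cvgB; [exact: cx|exact: cy].
  have c2 : (fun n => gamma * \sum_s del s * Dp y n s) @ \oo -->
            gamma * \sum_s del s * Ly s.
    apply: cvgMl_tmp; apply: cvg_sumS => s.
    by apply: cvgMl_tmp; exact: cy.
  apply: (ler_cvg_to c1 c2).
  by apply: nearW => n; exact: fin_ineq.
have Ly0 : forall s, 0 <= Ly s.
  move=> s; apply: (le_trans _ (nondecreasing_cvgn_le _ _ 0%N)).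
  - by rewrite /Dp big_geq.
  - by apply: Dp_nd => t s'; exact: sp_ge0.
  - exact: (cvgP _ (cy s)).
have gp : 0 < 1 - gamma by rewrite subr_gt0.
have Ed : forall s, dm s = (1 - gamma) * Ly s by [].
have Ed' : forall s, d' s = (1 - gamma) * Lx s by [].
set X := \sum_s Ly s * D_TV (pi' s) (pi s).
set Y := \sum_s Ly s * \sum_a pi s a * D_TV (P s a) (Pm s a).
have -> : \sum_s dm s * D_TV (pi' s) (pi s) = (1 - gamma) * X.
  by rewrite /X mulr_sumr; apply: eq_bigr => s _; rewrite Ed -mulrA.
have -> : \sum_s dm s * \sum_a pi s a * D_TV (P s a) (Pm s a) = (1 - gamma) * Y.
  by rewrite /Y mulr_sumr; apply: eq_bigr => s _; rewrite Ed -mulrA.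
have -> : \sum_s `|d' s - dm s| = (1 - gamma) * \sum_s `|Lx s - Ly s|.
  rewrite mulr_sumr; apply: eq_bigr => s _.
  by rewrite Ed Ed' -mulrBr normrM ger0_norm // ltW.
have -> : 2 * gamma / (1 - gamma) * ((1 - gamma) * X + (1 - gamma) * Y)
   = gamma * (2 * X + 2 * Y).
  by field; rewrite lt0r_neq0.
apply: (le_trans key); apply: ler_wpM2l => //.
have -> : 2 * X + 2 * Y = \sum_s Ly s * (2 * D_TV (pi' s) (pi s)
   + \sum_a pi s a * (2 * D_TV (P s a) (Pm s a))).
  rewrite /X /Y !mulr_sumr -big_split /=; apply: eq_bigr => s _.
  rewrite mulrDr; congr (_ + _); first by ring.
  rewrite mulrCA; congr (_ * _); rewrite mulr_sumr; apply: eq_bigr => b _; ring.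
apply: ler_sum => s _; rewrite [X in _ <= X]mulrC; apply: ler_wpM2r => //.
exact: del_le.
Qed.

End Main.



Theorem lemma1 (R : realType) (S A : finType) (gamma : R)
  (mu : S -> R) (P Pm : S -> A -> S -> R) (pi pi' : S -> A -> R) :
  0 <= gamma -> gamma < 1 ->
  is_distr mu -> is_kernel P -> is_kernel Pm ->
  is_policy pi -> is_policy pi' ->
  let d' := disc_state_distr gamma mu P pi' in
  let dm := disc_state_distr gamma mu Pm pi in
  \sum_(s : S) `|d' s - dm s|
    <= (2 * gamma) / (1 - gamma) *
       (\sum_(s : S) dm s * D_TV (pi' s) (pi s)
        + \sum_(s : S) dm s * \sum_(a : A) pi s a * D_TV (P s a) (Pm s a)).
Proof.
move=> g0 g1 hmu hP hPm hpi hpi'.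
exact: (main_ineq g0 g1 hmu hP hPm hpi hpi').
Qed.
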